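(* Let $\mathcal{T}$ be a tangle of order $k$ in a connectivity system $(E,\lambda)$, and let $X$ be a $\mathcal{T}$-strong $k$-separating set in $\lambda$. If $(X_i)_{i=1}^m$ is a partial $k$-sequence for $X$, then $X\cup \bigcup_{i=1}^m X_i\subseteq \mathrm{fcl}_{\mathcal{T}}(X)$.
   Context: A connectivity system is a pair $(E,\lambda)$ with $E$ finite and $\lambda$ an integer-valued symmetric submodular function on subsets of $E$. $X$ is $k$-separating if $\lambda(X)\le k$. A tangle of order $k$ is a collection $\mathcal T$ of subsets of $E$ with (T1) $\lambda(A)<k$ for $A\in\mathcal T$; (T2) if $\lambda(A)\le k-1$ then $A\in\mathcal T$ or $E-A\in\mathcal T$; (T3) $A\cup B\cup C\ne E$ for $A,B,C\in\mathcal T$; (T4) $E-\{e\}\notin\mathcal T$ for $e\in E$. A set is $\mathcal T$-weak if contained in a member of $\mathcal T$, and $\mathcal T$-strong otherwise. A $\mathcal T$-strong $k$-separating set $X$ is fully closed if $X\cup Y$ is not $k$-separating for every nonempty $\mathcal T$-weak $Y\subseteq E-X$. For a $\mathcal T$-strong $k$-separating $X$, $\mathrm{fcl}_{\mathcal T}(X)$ is the intersection of all fully closed $k$-separating sets containing $X$. A partial $k$-sequence for $X$ is a sequence $(X_i)_{i=1}^m$ of pairwise disjoint nonempty $\mathcal T$-weak subsets of $E-X$ such that $X\cup\bigcup_{i=1}^jX_i$ is $k$-separating for all $j\in\{1,\dots,m\}$. *)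

(* Defs.v *)
From mathcomp Require Import all_boot all_order all_algebra.
Set Implicit Arguments. Unset Strict Implicit. Unset Printing Implicit Defensive.
Import Order.TTheory GRing.Theory Num.Theory.
Local Open Scope ring_scope.

Definition connectivity_system (E : finType) (lam : {set E} -> int) : Prop :=
  (forall A : {set E}, lam A = lam (~: A)) /\
  (forall A B : {set E}, lam (A :|: B) + lam (A :&: B) <= lam A + lam B).

Definition k_separating (E : finType) (lam : {set E} -> int) (k : int)
  (X : {set E}) : Prop := lam X <= k.

Definition tangle (E : finType) (lam : {set E} -> int) (k : int)
  (T : {set {set E}}) : Prop :=
  [/\ (forall A, A \in T -> lam A < k),
      (forall A, lam A <= k - 1 -> A \in T \/ ~: A \in T),
      (forall A B C, A \in T -> B \in T -> C \in T -> A :|: B :|: C != setT)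
    & (forall e : E, ~: [set e] \notin T)].

Definition T_weak (E : finType) (T : {set {set E}}) (Y : {set E}) : bool :=
  [exists A in T, Y \subset A].

Definition T_strong (E : finType) (T : {set {set E}}) (Y : {set E}) : bool :=
  ~~ T_weak T Y.

Definition k_separatingb (E : finType) (lam : {set E} -> int) (k : int)
  (X : {set E}) : bool := lam X <= k.

Definition fully_closed (E : finType) (lam : {set E} -> int) (k : int)
  (T : {set {set E}}) (X : {set E}) : bool :=
  [&& T_strong T X, k_separatingb lam k X &
      [forall Y : {set E}, ((Y != set0) && T_weak T Y && (Y \subset ~: X)) ==>
        ~~ k_separatingb lam k (X :|: Y)]].

Definition fcl (E : finType) (lam : {set E} -> int) (k : int)
  (T : {set {set E}}) (X : {set E}) : {set E} :=
  \bigcap_(Z : {set E} | fully_closed lam k T Z && (X \subset Z)) Z.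

Definition partial_k_sequence (E : finType) (lam : {set E} -> int) (k : int)
  (T : {set {set E}}) (X : {set E}) (s : seq {set E}) : Prop :=
  [/\ (forall i j, (i < size s)%N -> (j < size s)%N -> i != j ->
          [disjoint nth set0 s i & nth set0 s j]),
      (forall i, (i < size s)%N ->
          [/\ nth set0 s i != set0, T_weak T (nth set0 s i)
            & nth set0 s i \subset ~: X])
    & (forall j, (1 <= j <= size s)%N ->
          k_separating lam k (X :|: \bigcup_(Y <- take j s) Y))].

(* Main.v *)
Require Import Defs.
From mathcomp Require Import all_boot all_order all_algebra.
From mathcomp Require Import zify.
Import Order.TTheory GRing.Theory Num.Theory.
Local Open Scope ring_scope.

Lemma weak_sub (E : finType) (T : {set {set E}}) (Y Y' : {set E}) :
  Y' \subset Y -> T_weak T Y -> T_weak T Y'.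
Proof.
move=> sub /existsP [A /andP [HA HYA]]; apply/existsP; exists A.
by rewrite HA (subset_trans sub HYA).
Qed.

Lemma key (E : finType) (lam : {set E} -> int) (k : int)
  (T : {set {set E}}) (X Z W : {set E}) :
  connectivity_system lam -> tangle lam k T -> T_strong T X ->
  lam X <= k -> fully_closed lam k T Z -> X \subset Z ->
  X \subset W -> lam W <= k -> T_weak T (W :\: Z) -> W \subset Z.
Proof.
move=> [Hsym Hsub] [T1 T2 T3 T4] HX HXk /and3P [HZs HZk /forallP HZ] XZ XW HWk HY.
apply/negPn/negP => nWZ.
have Ynz : W :\: Z != set0.
  apply/set0Pn; move/subsetPn: nWZ => [x xW xZ]; exists x; by rewrite inE xZ xW.
have := HZ (W :\: Z); rewrite Ynz HY /= (_ : W :\: Z \subset ~: Z); last by apply/subsetP=> x; rewrite !inE => /andP[].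
have -> : Z :|: (W :\: Z) = Z :|: W.
  by apply/setP => x; rewrite !inE; case: (x \in Z); case: (x \in W).
rewrite /k_separatingb -ltNge => HZW.
have HZk' : lam Z <= k by [].
have HA := Hsub Z W.
have Alt : lam (Z :&: W) <= k - 1 by lia.
have AnT : Z :&: W \notin T.
  apply/negP => AT; move: HX; rewrite /T_strong => /negP; apply.
  apply/existsP; exists (Z :&: W); by rewrite AT subsetI XZ XW.
have cAT : ~: (Z :&: W) \in T by case: (T2 _ Alt) => // H; rewrite H in AnT.
have Znz : ~: Z != set0.
  apply: contraNneq Ynz => H; apply/eqP; rewrite setDE H setI0 //.
have cZw : T_weak T (~: Z).
  apply/existsP; exists (~: (Z :&: W)); by rewrite cAT setCS subsetIl.
have := HZ (~: Z); rewrite Znz cZw subxx /= setUCr /k_separatingb -ltNge => HT.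
have H2 := Hsub X (~: X).
rewrite setUCr setICr -(Hsym X) in H2.
have H0 : lam set0 = lam setT by rewrite Hsym setC0.
lia.
Qed.

Theorem lemma3p4 (E : finType) (lam : {set E} -> int) (k : int)
  (T : {set {set E}}) (X : {set E}) (s : seq {set E}) :
  connectivity_system lam ->
  tangle lam k T ->
  T_strong T X ->
  k_separating lam k X ->
  partial_k_sequence lam k T X s ->
  X :|: \bigcup_(Y <- s) Y \subset fcl lam k T X.
Proof.
move=> Hc Ht HX HXk [_ Hw Hsep].
apply/bigcapsP => Z /andP [HZ XZ].
suff: forall j, (j <= size s)%N -> X :|: \bigcup_(Y <- take j s) Y \subset Z.
  by move/(_ (size s) (leqnn _)); rewrite take_size.
elim=> [|j IH] Hj.
  by rewrite take0 big_nil setU0.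
rewrite (take_nth set0 Hj) big_rcons.
have IH' := IH (ltnW Hj).
have [_ Hwj _] := Hw j Hj.
rewrite setUA; apply: (@key _ lam k T X Z _ Hc Ht HX HXk HZ XZ).
- by rewrite -setUA subsetUl.
- have := Hsep j.+1; rewrite Hj (take_nth set0 Hj) big_rcons setUA; exact.
- apply: (@weak_sub _ T (nth set0 s j) _ _ Hwj); apply/subsetP => x; rewrite !inE.
  move/subsetP: IH' => /(_ x); rewrite !inE.
  by case: (x \in Z); case: (x \in X); case: (x \in nth set0 s j);
     case: (x \in \bigcup_(Y <- take j s) Y) => // ->.
Qed.
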